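(* Let \(m\) be a positive integer that is not a perfect square, let \(a,b,c\) be positive integers with \(\gcd(am,b^2-c^2m)=1\), and let \(A,B\in\mathbb Z\). If \(A\geq abm+acm-am-cm-b+1\) and \(B\geq acm+ab-a-b-c+1\), then there exist \(x,y,z,w\in\mathbb N\) with \(a\sqrt m(x+y\sqrt m)+(b+c\sqrt m)(z+w\sqrt m)=A+B\sqrt m\).
   Context: \(\mathbb N\) denotes the set of non-negative integers. *)

(* Defs.v *)
From Stdlib Require Import Reals ZArith Lra Lia.
Open Scope R_scope.

Definition is_perfect_square (m : Z) : Prop := exists k : Z, m = (k * k)%Z.

(* Main.v *)
Require Import Defs.
From Stdlib Require Import Reals ZArith Lia Lra.
Open Scope R_scope.

Theorem theorem3 (m a b c A B : Z)
  (hm : (0 < m)%Z) (hmsq : ~ is_perfect_square m)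
  (ha : (0 < a)%Z) (hb : (0 < b)%Z) (hc : (0 < c)%Z)
  (hgcd : Z.gcd (a * m) (b ^ 2 - c ^ 2 * m) = 1%Z)
  (hA : (A >= a * b * m + a * c * m - a * m - c * m - b + 1)%Z)
  (hB : (B >= a * c * m + a * b - a - b - c + 1)%Z) :
  exists x y z w : nat,
    IZR a * sqrt (IZR m) * (INR x + INR y * sqrt (IZR m))
    + (IZR b + IZR c * sqrt (IZR m)) * (INR z + INR w * sqrt (IZR m))
    = IZR A + IZR B * sqrt (IZR m).
Proof.
  destruct (Z.gcd_bezout _ _ _ hgcd) as [u [v huv]].
  set (M := (a * m)%Z) in *.
  assert (HM : (0 < M)%Z) by (unfold M; nia).
  set (z0 := (v * (b * A - c * m * B))%Z).
  set (w0 := (v * (b * B - c * A))%Z).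
  set (q1 := (z0 / M)%Z). set (q2 := (w0 / a)%Z).
  set (z := (z0 mod M)%Z). set (w := (w0 mod a)%Z).
  assert (Ez : z = (z0 - M * q1)%Z) by (unfold z, q1; rewrite Z.mod_eq; lia).
  assert (Ew : w = (w0 - a * q2)%Z) by (unfold w, q2; rewrite Z.mod_eq; lia).
  assert (Bz : (0 <= z < M)%Z) by (apply Z.mod_pos_bound; lia).
  assert (Bw : (0 <= w < a)%Z) by (apply Z.mod_pos_bound; lia).
  set (y := (A * u + b * q1 + c * q2)%Z).
  set (x := (B * u * m + b * q2 + c * m * q1)%Z).
  assert (EA : A = (M * y + b * z + c * m * w)%Z).
  { unfold y. rewrite Ez, Ew. unfold z0, w0.
    replace A with (A*(u*M + v*(b^2-c^2*m)))%Z at 1 by (rewrite huv; ring). unfold M in *. ring. }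
  assert (EB : B = (a * x + b * w + c * z)%Z).
  { unfold x. rewrite Ez, Ew. unfold z0, w0.
    replace B with (B*(u*M + v*(b^2-c^2*m)))%Z at 1 by (rewrite huv; ring). unfold M. ring. }
  assert (Hy : (0 <= y)%Z).
  { assert (h1 : (b*z <= b*(M-1))%Z) by (apply Z.mul_le_mono_nonneg_l; lia).
    assert (h2 : (c*m*w <= c*m*(a-1))%Z) by (apply Z.mul_le_mono_nonneg_l; lia).
    assert (h3 : (0 < M*(y+1))%Z).
    { rewrite Z.mul_add_distr_l. unfold M in *. lia. }
    apply (Z.mul_pos_cancel_l M (y+1)) in h3; lia. }
  assert (Hx : (0 <= x)%Z).
  { assert (h1 : (b*w <= b*(a-1))%Z) by (apply Z.mul_le_mono_nonneg_l; lia).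
    assert (h2 : (c*z <= c*(M-1))%Z) by (apply Z.mul_le_mono_nonneg_l; lia).
    assert (h3 : (0 < a*(x+1))%Z).
    { rewrite Z.mul_add_distr_l. unfold M in *. lia. }
    apply (Z.mul_pos_cancel_l a (x+1)) in h3; lia. }
  exists (Z.to_nat x), (Z.to_nat y), (Z.to_nat z), (Z.to_nat w).
  rewrite !INR_IZR_INZ, !Z2Nat.id by lia.
  assert (hs : sqrt (IZR m) * sqrt (IZR m) = IZR m).
  { apply sqrt_sqrt. apply IZR_le. lia. }
  set (s := sqrt (IZR m)) in *.
  rewrite EA, EB. unfold M. rewrite !plus_IZR, !mult_IZR.
  rewrite <- hs. ring.
Qed.
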